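(* Let $K$ be an imaginary quadratic field of class number $1$, with ring of integers $\mathcal{O}_K\subset\mathbb{C}$, and let $z\in\mathcal{O}_K$, $z\neq 0$. There is a natural number $n$ such that $z^n$ is a real number if and only if $\arg z$ is a multiple of $\pi/4$ when $K=\mathbb{Q}(\sqrt{-1})$, a multiple of $\pi/6$ when $K=\mathbb{Q}(\sqrt{-3})$, and a multiple of $\pi/2$ otherwise. *)

(* Defs.v *)
From mathcomp Require Import all_boot all_order all_algebra.
From mathcomp Require Import reals trigo.
From mathcomp Require Import complex.
Import GRing.Theory Num.Theory.
Local Open Scope ring_scope.
Local Open Scope complex_scope.

Section QuadDefs.
Variable R : realType.

Definition squarefree (d : nat) : Prop :=
  forall p : nat, prime p -> ~~ (p ^ 2 %| d)%N.

Definition sqrt_neg (d : nat) : R[i] := 0 +i* Num.sqrt (d%:R : R).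

Definition inK (d : nat) (z : R[i]) : Prop :=
  exists a b : rat, z = ratr a + ratr b * sqrt_neg d.

Definition alg_int (z : R[i]) : Prop :=
  exists p : {poly int}, p \is monic /\ root (map_poly (fun k : int => k%:~R) p) z.

Definition OK (d : nat) (z : R[i]) : Prop := inK d z /\ alg_int z.

Definition is_ideal (d : nat) (I : R[i] -> Prop) : Prop :=
  [/\ forall x, I x -> OK d x,
      I 0,
      forall x y, I x -> I y -> I (x + y)
    & forall r x, OK d r -> I x -> I (r * x)].

Definition is_principal (d : nat) (I : R[i] -> Prop) : Prop :=
  exists a, OK d a /\ forall x, I x <-> exists r, OK d r /\ x = a * r.

Definition class_number_one (d : nat) : Prop :=
  forall I, is_ideal d I -> is_principal d I.

Definition arg_multiple_of_pi_div (m : nat) (z : R[i]) : Prop :=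
  exists (k : int) (r : R), 0 < r /\
    z = (r * cos (k%:~R * pi / m%:R)) +i* (r * sin (k%:~R * pi / m%:R)).

End QuadDefs.

(* Main.v *)
Require Import Defs.
From mathcomp Require Import all_boot all_order all_algebra.
From mathcomp Require Import reals trigo.
From mathcomp Require Import complex.
From mathcomp Require Import ring lra zify.
Import Order.TTheory GRing.Theory Num.Theory.
Local Open Scope ring_scope.


Fixpoint cheb {T : pzRingType} (u : T) (n : nat) : T :=
  match n with
  | 0 => 2%:R
  | 1 => u
  | S ((S m) as k) => u * cheb u k - cheb u m
  end.

Lemma chebSS {T : pzRingType} (u : T) n : cheb u n.+2 = u * cheb u n.+1 - cheb u n.
Proof. by []. Qed.

Lemma cheb_rat {R : fieldType} (f : {rmorphism rat -> R}) u n : f (cheb u n) = cheb (f u) n.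
Proof.
suff: f (cheb u n) = cheb (f u) n /\ f (cheb u n.+1) = cheb (f u) n.+1 by case.
elim: n => [|n [IH1 IH2]]; first by rewrite /= rmorph_nat.
split=> //. by rewrite !chebSS rmorphB rmorphM IH1 IH2.
Qed.

Fixpoint Qs (p q : int) (n : nat) : int :=
  match n with
  | 0 => 2
  | 1 => p
  | S ((S m) as k) => p * Qs p q k - q ^+ 2 * Qs p q m
  end.

Lemma coprime_one (a b n : nat) : coprime a b -> (b %| a ^ n)%N -> b = 1%N.
Proof.
move=> cab dv. have := coprimeXl n cab. rewrite /coprime. by move/gcdn_idPr: dv => ->; move/eqP.
Qed.

Lemma cheb_int (u : rat) n : (0 < n)%N -> cheb u n = 2 -> denq u = 1.
Proof.
move=> n0 hc.
set p := numq u; set q := denq u.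
have q0 : (q%:~R : rat) != 0 by rewrite intr_eq0 denq_neq0.
have uE : u = p%:~R / q%:~R by rewrite divq_num_den.
have F1 : forall k, (Qs p q k)%:~R = (q%:~R) ^+ k * cheb u k /\
                    (Qs p q k.+1)%:~R = (q%:~R) ^+ k.+1 * cheb u k.+1 :> rat.
  elim=> [|k [IH1 IH2]]; first by rewrite /= expr0 mul1r expr1 uE mulrC divfK.
  split=> //. rewrite chebSS [Qs p q k.+2]/= -/(Qs p q k.+1) intrB !intrM IH1 IH2 uE.
  move: (cheb _ k.+1) (cheb _ k) q0 => A B; move: (q%:~R : rat) (p%:~R : rat) => Q P Q0.
  rewrite !exprS. field. exact: Q0.
have F2 : forall k, (q %| Qs p q k.+1 - p ^+ k.+1)%Z /\ (q %| Qs p q k.+2 - p ^+ k.+2)%Z.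
  elim=> [|k [IH1 IH2]].
    rewrite /= subrr dvdz0; split=> //.
    have -> : p * p - q ^+ 2 * 2 - p ^+ 2 = q * (- (q * 2)) by ring.
    exact: dvdz_mulr.
  split=> //.
  have -> : Qs p q k.+3 - p ^+ k.+3 = p * (Qs p q k.+2 - p ^+ k.+2) - q * (q * Qs p q k.+1).
    rewrite [Qs p q k.+3]/= -/(Qs p q k.+2) -/(Qs p q k.+1). rewrite !exprS. ring.
  apply: rpredB; [exact: dvdz_mull | exact: dvdz_mulr].
case: n n0 hc => // n _ hc.
have hQ : Qs p q n.+1 = q ^+ n.+1 * 2.
  apply: (@intr_inj rat). by rewrite (F1 n.+1).1 hc intrM rmorphXn.
have := (F2 n).1. rewrite hQ.
have hq2 : (q %| q ^+ n.+1 * 2)%Z by rewrite exprS -mulrA dvdz_mulr.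
move=> h. have : (q %| p ^+ n.+1)%Z.
  have -> : p ^+ n.+1 = q ^+ n.+1 * 2 - (q ^+ n.+1 * 2 - p ^+ n.+1) by ring.
  exact: rpredB.
rewrite dvdzE abszX => /(coprime_one _ _ _ (coprime_num_den u)).
move=> h1. apply/eqP. rewrite -[q]gtz0_abs ?denq_gt0 //. by rewrite h1.
Qed.

Lemma sq_int (e : rat) (N : int) : e ^+ 2 = N%:~R -> denq e = 1.
Proof.
move=> he.
set p := numq e; set q := denq e.
have q0 : (q%:~R : rat) != 0 by rewrite intr_eq0 denq_neq0.
have eE : e = p%:~R / q%:~R by rewrite divq_num_den.
have h : p ^+ 2 = N * q ^+ 2.
  apply: (@intr_inj rat). rewrite !expr2 !intrM -expr2 -he eE. field. exact: q0.
have : (q %| p ^+ 2)%Z by rewrite h dvdz_mull // exprS dvdz_mulr.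
rewrite dvdzE abszX => /(coprime_one _ _ _ (coprime_num_den e)).
move=> h1. apply/eqP. rewrite -[q]gtz0_abs ?denq_gt0 //. by rewrite h1.
Qed.

Definition squarefree' (d : nat) : Prop :=
  forall p : nat, prime p -> ~~ (p ^ 2 %| d)%N.

Lemma sqf_sq (d m : nat) : (0 < d)%N -> squarefree' d -> d = (m ^ 2)%N -> d = 1%N.
Proof.
move=> d0 sq dE.
have [m1|m1] := leqP m 1.
  move: dE d0; case: m m1 => [|[|]] //= _ -> //.
have pp := pdiv_prime m1.
have := sq _ pp. by rewrite dE dvdn_exp2r ?pdiv_dvd.
Qed.

Lemma sqf_3sq (d m : nat) : (0 < d)%N -> squarefree' d -> (3 * d = m ^ 2)%N -> d = 3%N.
Proof.
move=> d0 sq dE.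
have : (3 %| m ^ 2)%N by rewrite -dE dvdn_mulr.
rewrite Euclid_dvdX // andbT => /dvdnP[t mE].
have dE' : d = (3 * t ^ 2)%N.
  apply/eqP; rewrite -(eqn_pmul2l (isT : (0 < 3)%N)) dE mE. apply/eqP; ring.
have [t1|t1] := leqP t 1.
  move: dE' d0; case: t t1 {mE} => [|[|]] //= _ -> //.
have pp := pdiv_prime t1.
have := sq _ pp. by rewrite dE' dvdn_mull // dvdn_exp2r ?pdiv_dvd.
Qed.

Local Open Scope complex_scope.

Section RS.
Variable R : realType.

Lemma mulcE (a b c d : R) : (a +i* b) * (c +i* d) = (a*c - b*d) +i* (a*d + b*c).
Proof. by []. Qed.
Lemma addcE (a b c d : R) : (a +i* b) + (c +i* d) = (a+c) +i* (b+d).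
Proof. by []. Qed.
Lemma oppcE (a b : R) : - (a +i* b) = (-a) +i* (-b).
Proof. by []. Qed.
Lemma ratrC (q : rat) : (ratr q : R[i]) = (ratr q : R) +i* 0.
Proof. by rewrite -[RHS]/((ratr q : R)%:C) (fmorph_rat (real_complex R)). Qed.
Lemma natC (n : nat) : (n%:R : R[i]) = n%:R +i* 0.
Proof. by rewrite -[RHS]/((n%:R : R)%:C) (rmorph_nat (real_complex R)). Qed.
Lemma onec : (1 : R[i]) = 1 +i* 0. Proof. by []. Qed.

Lemma demoivre (r t : R) n :
  ((r * cos t) +i* (r * sin t)) ^+ n = (r ^+ n * cos (n%:R * t)) +i* (r ^+ n * sin (n%:R * t)).
Proof.
elim: n => [|n IH]; first by rewrite expr0 !mul0r cos0 sin0 !mulr1 mulr0.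
rewrite exprS IH mulcE -addn1 natrD mulrDl mul1r cosD sinD.
congr (_ +i* _); rewrite exprD expr1; ring.
Qed.

Lemma sin_intpi (k : int) : sin (k%:~R * pi) = 0 :> R.
Proof.
have hn : forall n : nat, sin (n%:R * pi) = 0 :> R.
  elim=> [|n IH]; first by rewrite mul0r sin0.
  by rewrite -addn1 natrD mulrDl mul1r sinDpi IH oppr0.
case: k => n; first exact: hn.
by rewrite NegzE intrN mulNr sinN hn oppr0.
Qed.

Lemma sqr_eq_ge0 (a b : R) : 0 <= a -> 0 <= b -> a ^+ 2 = b ^+ 2 -> a = b.
Proof.
move=> ha hb h. by rewrite -(ger0_norm ha) -(ger0_norm hb) -!sqrtr_sqr h.
Qed.

Lemma arg_of (m : nat) (k : int) (x y : R) : (0 < m)%N -> (x != 0) || (y != 0) ->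
  0 <= cos (k%:~R * pi / m%:R : R) -> 0 <= sin (k%:~R * pi / m%:R : R) ->
  x ^+ 2 * sin (k%:~R * pi / m%:R : R) ^+ 2 = y ^+ 2 * cos (k%:~R * pi / m%:R : R) ^+ 2 ->
  arg_multiple_of_pi_div R m (x +i* y).
Proof.
move=> m0 nz.
set t := k%:~R * pi / m%:R => hc hs hr.
set r := Num.sqrt (x ^+ 2 + y ^+ 2).
have hN : 0 < x ^+ 2 + y ^+ 2.
  case/orP: nz => h.
    by apply: ltr_pwDl; rewrite ?sqr_ge0 // exprn_even_gt0 // h orbT.
  by apply: ltr_pwDr; rewrite ?sqr_ge0 // exprn_even_gt0 // h orbT.
have r0 : 0 < r by rewrite sqrtr_gt0.
have r2 : r ^+ 2 = x ^+ 2 + y ^+ 2 by rewrite sqr_sqrtr // ltW.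
have cs := cos2Dsin2 t.
have hx : `|x| = r * cos t.
  apply: sqr_eq_ge0 => //; first by rewrite mulr_ge0 // ltW.
  rewrite real_normK ?num_real // exprMn r2.
  have -> : cos t ^+ 2 = 1 - sin t ^+ 2 by lra.
  nra.
have hy : `|y| = r * sin t.
  apply: sqr_eq_ge0 => //; first by rewrite mulr_ge0 // ltW.
  rewrite real_normK ?num_real // exprMn r2.
  have -> : sin t ^+ 2 = 1 - cos t ^+ 2 by lra.
  nra.
have mR : (m%:R : R) != 0 by rewrite pnatr_eq0 -lt0n.
have tpi : (m%:Z - k)%:~R * pi / m%:R = pi - t.
  rewrite intrB /t. field. exact: mR.
have tN : (- k)%:~R * pi / m%:R = - t.
  rewrite intrN /t. field. exact: mR.
have tpi2 : (k - m%:Z)%:~R * pi / m%:R = - (pi - t).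
  rewrite intrB /t. field. exact: mR.
have cpi : cos (pi - t) = - cos t by rewrite addrC cosDpi cosN.
have spi : sin (pi - t) = sin t by rewrite addrC sinDpi sinN opprK.
have [x0|x0] := leP 0 x; have [y0|y0] := leP 0 y.
- exists k, r; split => //. congr (_ +i* _).
  + by rewrite -hx ger0_norm.
  + by rewrite -hy ger0_norm.
- exists (- k), r; split => //. rewrite tN cosN sinN. congr (_ +i* _).
  + by rewrite -hx ger0_norm.
  + by rewrite mulrN -hy ltr0_norm ?opprK.
- exists (m%:Z - k), r; split => //. rewrite tpi cpi spi. congr (_ +i* _).
  + by rewrite mulrN -hx ltr0_norm ?opprK.
  + by rewrite -hy ger0_norm.
- exists (k - m%:Z), r; split => //. rewrite tpi2 cosN sinN cpi spi. congr (_ +i* _).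
  + by rewrite mulrN -hx ltr0_norm ?opprK.
  + by rewrite mulrN -hy ltr0_norm ?opprK.
Qed.


Lemma ReLin (a : R) (v u : R[i]) : complex.Re ((a +i* 0) * v - u) = a * complex.Re v - complex.Re u.
Proof. case: v => v1 v2; case: u => u1 u2. rewrite mulcE /=. ring. Qed.

Lemma forward (x y : R) n : (0 < n)%N -> (x != 0) || (y != 0) ->
  complex.Im ((x +i* y) ^+ n) = 0 ->
  cheb (2 * (x ^+ 2 - y ^+ 2) / (x ^+ 2 + y ^+ 2)) n = 2.
Proof.
move=> n0 nz hIm.
set N := x ^+ 2 + y ^+ 2.
have hN : 0 < N.
  case/orP: nz => h.
    by apply: ltr_pwDl; rewrite ?sqr_ge0 // exprn_even_gt0 // h orbT.
  by apply: ltr_pwDr; rewrite ?sqr_ge0 // exprn_even_gt0 // h orbT.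
have N0 : N != 0 by rewrite gt_eqF.
set c := (x ^+ 2 - y ^+ 2) / N.
set s := 2 * x * y / N.
set w := c +i* s.
have hw : (x +i* y) ^+ 2 = (N +i* 0) * w.
  rewrite expr2 !mulcE /w /c /s /N. congr (_ +i* _); field; exact: N0.
have hcs : c ^+ 2 + s ^+ 2 = 1.
  rewrite /c /s. move: N0; rewrite /N => N0. field. exact: N0.
have hw2 : w ^+ 2 = ((2 * c) +i* 0) * w - 1.
  rewrite expr2 /w !mulcE onec oppcE addcE. congr (_ +i* _); nra.
set z := x +i* y.
have hzn : (z ^+ n) ^+ 2 = (N +i* 0) ^+ n.
  have hz : z * (x +i* - y) = N +i* 0 by rewrite mulcE /N; congr (_ +i* _); ring.
  have hconj : (z ^+ n)^* = z ^+ n.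
    case E: (z ^+ n) hIm => [a b] /= ->. by rewrite oppr0.
  have hcz : z^* = x +i* - y by [].
  have hX : (z ^+ n)^* = (x -i* y) ^+ n by rewrite -hcz; exact: rmorphXn.
  by rewrite expr2 -{2}hconj hX -exprMn hz.
have hwn : w ^+ n = 1.
  apply: (@mulfI _ ((N +i* 0) ^+ n)).
    rewrite expf_neq0 //. apply/negP => /eqP [] /eqP. by rewrite (negPf N0).
  by rewrite -exprMn -hw -exprM mulnC exprM hzn mulr1.
have h4 : forall k, 2 * complex.Re (w ^+ k) = cheb (2 * c) k /\
                    2 * complex.Re (w ^+ k.+1) = cheb (2 * c) k.+1.
  elim=> [|k [IH1 IH2]]; first by rewrite expr0 expr1 /= mulr1.
  split=> //.
  have -> : w ^+ k.+2 = ((2 * c) +i* 0) * w ^+ k.+1 - w ^+ k.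
    rewrite -addn2 exprD hw2 mulrBr mulr1 exprS. congr (_ - _). ring.
  rewrite ReLin chebSS -IH1 -IH2. ring.
rewrite -mulrA -/c -(h4 n).1 hwn /=. by rewrite mulr1.
Qed.


Lemma backward (m : nat) (z : R[i]) : (0 < m)%N -> arg_multiple_of_pi_div R m z ->
  exists n : nat, (0 < n)%N /\ complex.Im (z ^+ n) = 0.
Proof.
move=> m0 [k [r [r0 ->]]]; exists m; split => //.
rewrite demoivre /=.
have mR : (m%:R : R) != 0 by rewrite pnatr_eq0 -lt0n.
have -> : m%:R * (k%:~R * pi / m%:R) = k%:~R * pi :> R by field.
by rewrite sin_intpi mulr0.
Qed.

Lemma cos_ge0_in (t : R) : 0 <= t <= pi / 2 -> 0 <= cos t.
Proof. move=> /andP[h1 h2]; apply: cos_ge0_pihalf; apply/andP; split; have := pi_gt0 R; lra. Qed.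

Lemma sin_ge0_in (t : R) : 0 <= t <= pi / 2 -> 0 <= sin t.
Proof. move=> /andP[h1 h2]; apply: sin_ge0_pi; apply/andP; split; have := pi_gt0 R; lra. Qed.

Lemma sin_pi4 : sin (pi / 4) = cos (pi / 4) :> R.
Proof.
have e : pi / 4 = - (pi / 4) + pi / 2 :> R by field.
by rewrite {1}e sinDpihalf cosN.
Qed.

Lemma cos2x (t : R) : cos (t + t) = 2 * cos t ^+ 2 - 1.
Proof. rewrite cosD. have := cos2Dsin2 t. rewrite !expr2. lra. Qed.

Lemma cos_pi3 : cos (pi / 3) = 1 / 2 :> R.
Proof.
have h0 : 0 <= cos (pi / 3) :> R by apply: cos_ge0_in; apply/andP; split; have := pi_gt0 R; lra.
have h : cos (pi / 3 + pi / 3) = - cos (pi / 3) :> R.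
  have -> : pi / 3 + pi / 3 = - (pi / 3) + pi :> R by field.
  by rewrite cosDpi cosN.
rewrite cos2x in h. nra.
Qed.

Lemma cos_pi6 : cos (pi / 6) ^+ 2 = 3 / 4 :> R.
Proof.
have h : cos (pi / 6 + pi / 6) = 1 / 2 :> R.
  have -> : pi / 6 + pi / 6 = pi / 3 :> R by field.
  exact: cos_pi3.
rewrite cos2x in h. lra.
Qed.

End RS.


Lemma int_of_rat (e : rat) : denq e = 1 -> e = (numq e)%:~R.
Proof. by move=> h; rewrite numqE h mulr1. Qed.

Lemma rat_sq_nat (e : rat) (N : nat) : e ^+ 2 = N%:R -> exists t : nat, N = (t ^ 2)%N.
Proof.
move=> he.
have hd : denq e = 1 by apply: (@sq_int e N%:Z).
have eE := @int_of_rat e hd.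
have h : numq e ^+ 2 = N%:Z.
  apply: (@intr_inj rat). by rewrite expr2 intrM -expr2 -eE he.
exists `|numq e|%N. by rewrite -abszX h.
Qed.

Theorem theorem4p1 (R : realType) (d : nat) (z : R[i]) :
  (0 < d)%N -> squarefree d -> class_number_one R d ->
  OK R d z -> z != 0 ->
  (exists n : nat, (0 < n)%N /\ complex.Im (z ^+ n) = 0) <->
  arg_multiple_of_pi_div R (if d == 1%N then 4%N else if d == 3%N then 6%N else 2%N) z.
Proof.
move=> d0 sqf _ [[a [b zE]] _] z0.
set m := (if d == 1%N then 4%N else if d == 3%N then 6%N else 2%N).
have m0 : (0 < m)%N by rewrite /m; case: (d == 1)%N; case: (d == 3)%N.
split; last exact: backward.
move=> [n [n0 hIm]].
set s := Num.sqrt (d%:R : R).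
have s2 : s ^+ 2 = d%:R by rewrite sqr_sqrtr // ler0n.
set x := (ratr a : R); set y := ratr b * s.
have zxy : z = x +i* y.
  rewrite zE /sqrt_neg !ratrC mulcE addcE /x /y. by rewrite !mulr0 !mul0r subr0 !addr0 add0r.
have nz : (x != 0) || (y != 0).
  move: z0; rewrite zxy; case: (eqVneq x 0) => [->|//]; case: (eqVneq y 0) => [->|//].
  by case/negP; apply: eqxx.
have nzq : (a != 0) || (b != 0).
  case/orP: nz => h; apply/orP; [left|right]; apply: contra h => /eqP hab;
    by rewrite /x /y hab ?rmorph0 ?mul0r.
rewrite zxy in hIm *.
have hF := @forward R x y n n0 nz hIm.
have y2 : y ^+ 2 = ratr b ^+ 2 * d%:R by rewrite /y exprMn s2.
set A := a ^+ 2; set B := d%:R * b ^+ 2.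
have A0 : 0 <= A by rewrite /A sqr_ge0.
have B0 : 0 <= B by rewrite /B mulr_ge0 ?ler0n ?sqr_ge0.
have D0 : 0 < A + B.
  case/orP: nzq => h.
    have : 0 < A by rewrite /A exprn_even_gt0 // h orbT.
    lra.
  have : 0 < B by rewrite /B mulr_gt0 ?ltr0n // exprn_even_gt0 // h orbT.
  lra.
set uq := 2 * (A - B) / (A + B).
have huq : ratr uq = 2 * (x ^+ 2 - y ^+ 2) / (x ^+ 2 + y ^+ 2) :> R.
  rewrite y2 /uq /A /B fmorph_div rmorphM rmorph_nat rmorphB rmorphD !expr2 !rmorphM !rmorph_nat /x.
  congr (_ / _); ring.
have hc : cheb uq n = 2.
  apply: (fmorph_inj (ratr : {rmorphism rat -> R})).
  by rewrite /= cheb_rat /= huq hF rmorph_nat.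
have hden := @cheb_int uq n n0 hc.
have uqD : uq * (A + B) = 2 * (A - B) by rewrite /uq divfK // gt_eqF.
have hb : -2 <= uq <= 2 by apply/andP; split; nra.
have uqE := @int_of_rat uq hden.
set k := numq uq in uqE.
have hk : -2 <= k <= 2.
  move: hb; rewrite uqE => /andP[h1 h2]; apply/andP; split.
    by rewrite -(ler_int rat).
  by rewrite -(ler_int rat).
have hR : 2 * (x ^+ 2 - y ^+ 2) = k%:~R * (x ^+ 2 + y ^+ 2) :> R.
  have hN : x ^+ 2 + y ^+ 2 != 0.
    have : 0 < x ^+ 2 + y ^+ 2.
      case/orP: nz => h.
        have : 0 < x ^+ 2 by rewrite exprn_even_gt0 // h orbT.
        have := sqr_ge0 y; lra.
      have : 0 < y ^+ 2 by rewrite exprn_even_gt0 // h orbT.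
      have := sqr_ge0 x; lra.
    by move/gt_eqF => ->.
  by rewrite -[LHS](divfK hN) -huq uqE rmorph_int.
have hQ : k%:~R * (A + B) = 2 * (A - B) by rewrite -uqE.
have hm2 : exists2 h, m = (2 * h)%N & (0 < h)%N.
  rewrite /m; case: (d == 1)%N; first by exists 2%N.
  case: (d == 3)%N; first by exists 3%N. by exists 1%N.
have hk5 : k = -2 \/ k = -1 \/ k = 0 \/ k = 1 \/ k = 2 by move/andP: hk => [? ?]; lia.
case: hk5 => [k2|[k1|[k0|[k1|k2]]]]; rewrite ?k2 ?k1 ?k0 in hR hQ.
-
  have x0 : x = 0.
    have : x ^+ 2 = 0 by move: hR; rewrite -[(-2)%:~R]/(- 2 : R); lra.
    by move/eqP; rewrite expf_eq0 /= => /eqP.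
  case: hm2 => h mE h0.
  have hR0 : (h%:Z%:~R * pi / m%:R : R) = pi / 2.
    rewrite mE natrM -[h%:Z%:~R]/(h%:R : R). field.
    by rewrite pnatr_eq0 -lt0n.
  apply: (@arg_of R m h%:Z) => //; rewrite hR0 ?cos_pihalf ?sin_pihalf //.
  by rewrite x0; ring.
-
  have hQ' : 3 * A = B by move: hQ; rewrite -[(-1)%:~R]/(- 1 : rat); lra.
  have b0 : b != 0.
    apply/negP => /eqP b0; move: nzq; rewrite b0 eqxx orbF => /negP; apply.
    move: hQ; rewrite /A /B b0 expr0n /= mulr0 addr0 => hQ.
    have : a ^+ 2 = 0 by lra.
    by move/eqP; rewrite expf_eq0.
  have [t ht] : exists t : nat, (3 * d)%N = (t ^ 2)%N.
    apply: (@rat_sq_nat (3 * a / b)).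
    have -> : (3 * a / b) ^+ 2 = 3 * (3 * A) / b ^+ 2 by rewrite /A; field.
    rewrite hQ' /B natrM. field. by rewrite ?expf_neq0.
  have d3 : d = 3%N by apply: (@sqf_3sq d t).
  have mE : m = 6%N by rewrite /m d3.
  have hxy : y ^+ 2 = 3 * x ^+ 2 by move: hR; rewrite -[(-1)%:~R]/(- 1 : R); lra.
  have hR0 : ((2 : int)%:~R * pi / 6%:R : R) = pi / 3 by field.
  rewrite mE; apply: (@arg_of R 6 2) => //; rewrite hR0.
  + by apply: cos_ge0_in; apply/andP; split; have := pi_gt0 R; lra.
  + by apply: sin_ge0_in; apply/andP; split; have := pi_gt0 R; lra.
  have cs := cos2Dsin2 (pi / 3 : R). rewrite cos_pi3 in cs *.
  have ss : sin (pi / 3) ^+ 2 = 3 / 4 :> R by move: cs; rewrite expr2; lra.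
  rewrite hxy ss expr2; lra.
-
  have hQ' : A = B by move: hQ; rewrite mul0r; lra.
  have b0 : b != 0.
    apply/negP => /eqP b0; move: nzq; rewrite b0 eqxx orbF => /negP; apply.
    move: hQ; rewrite /A /B b0 expr0n /= mulr0 addr0 => hQ.
    have : a ^+ 2 = 0 by lra.
    by move/eqP; rewrite expf_eq0.
  have [t ht] : exists t : nat, d = (t ^ 2)%N.
    apply: (@rat_sq_nat (a / b)).
    have -> : (a / b) ^+ 2 = A / b ^+ 2 by rewrite /A; field.
    rewrite hQ' /B. field. by rewrite ?expf_neq0.
  have d1 : d = 1%N by apply: (@sqf_sq d t).
  have mE : m = 4%N by rewrite /m d1.
  have hxy : y ^+ 2 = x ^+ 2 by move: hR; rewrite mul0r; lra.
  have hR0 : ((1 : int)%:~R * pi / 4%:R : R) = pi / 4 by field.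
  rewrite mE; apply: (@arg_of R 4 1) => //; rewrite hR0.
  + by apply: cos_ge0_in; apply/andP; split; have := pi_gt0 R; lra.
  + by apply: sin_ge0_in; apply/andP; split; have := pi_gt0 R; lra.
  by rewrite sin_pi4 hxy.
-
  have hQ' : A = 3 * B by move: hQ; rewrite mul1r; lra.
  have b0 : b != 0.
    apply/negP => /eqP b0; move: nzq; rewrite b0 eqxx orbF => /negP; apply.
    move: hQ; rewrite /A /B b0 expr0n /= mulr0 addr0 => hQ.
    have : a ^+ 2 = 0 by lra.
    by move/eqP; rewrite expf_eq0.
  have [t ht] : exists t : nat, (3 * d)%N = (t ^ 2)%N.
    apply: (@rat_sq_nat (a / b)).
    have -> : (a / b) ^+ 2 = A / b ^+ 2 by rewrite /A; field.
    rewrite hQ' /B natrM. field. by rewrite ?expf_neq0.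
  have d3 : d = 3%N by apply: (@sqf_3sq d t).
  have mE : m = 6%N by rewrite /m d3.
  have hxy : x ^+ 2 = 3 * y ^+ 2 by move: hR; rewrite mul1r; lra.
  have hR0 : ((1 : int)%:~R * pi / 6%:R : R) = pi / 6 by field.
  rewrite mE; apply: (@arg_of R 6 1) => //; rewrite hR0.
  + by apply: cos_ge0_in; apply/andP; split; have := pi_gt0 R; lra.
  + by apply: sin_ge0_in; apply/andP; split; have := pi_gt0 R; lra.
  have cs := cos2Dsin2 (pi / 6 : R). rewrite cos_pi6 in cs *.
  have ss : sin (pi / 6) ^+ 2 = 1 / 4 :> R by move: cs; lra.
  rewrite hxy ss; lra.
-
  have y0 : y = 0.
    have : y ^+ 2 = 0 by move: hR; lra.
    by move/eqP; rewrite expf_eq0 /= => /eqP.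
  have hR0 : ((0 : int)%:~R * pi / m%:R : R) = 0 by rewrite !mul0r.
  apply: (@arg_of R m 0) => //; rewrite hR0 ?cos0 ?sin0 //.
  by rewrite y0; ring.
Qed.
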